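(* There is a subset $A$ of the unit circle $S^1\subseteq\mathbb{R}^2$ such that for every line $l\subseteq\mathbb{R}^2$ and the orthogonal projection $\pi:\mathbb{R}^2\to l$, the set $\pi[A]$ is a Bernstein set in $\pi[S^1]$.
   Context: A subset $S$ of a Polish space $Y$ is a Bernstein set in $Y$ if for every nonempty perfect set $P\subseteq Y$ we have $S\cap P\neq\emptyset$ and $(Y\setminus S)\cap P\neq\emptyset$. *)

(* Defs.v *)
From Stdlib Require Import Reals.
Open Scope R_scope.

Definition pt := (R * R)%type.

Definition dist2 (p q : pt) : R :=
  sqrt ((fst p - fst q)^2 + (snd p - snd q)^2).

Definition S1 (x : pt) : Prop := (fst x)^2 + (snd x)^2 = 1.

Definition dot (p q : pt) : R := fst p * fst q + snd p * snd q.

(* The line l = { p + t u | t in R }, u <> 0, and the orthogonal projection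
   of R^2 onto it. Every line of R^2 is of this form. *)
Definition line (p u : pt) (y : pt) : Prop :=
  exists t : R, y = (fst p + t * fst u, snd p + t * snd u).

Definition orth_proj (p u : pt) (x : pt) : pt :=
  let t := dot (fst x - fst p, snd x - snd p) u / dot u u in
  (fst p + t * fst u, snd p + t * snd u).

Definition image (f : pt -> pt) (A : pt -> Prop) (y : pt) : Prop :=
  exists x, A x /\ y = f x.

Definition closed_in (Y P : pt -> Prop) : Prop :=
  forall x, Y x ->
    (forall eps, 0 < eps -> exists y, P y /\ dist2 x y < eps) -> P x.

Definition no_isolated (P : pt -> Prop) : Prop :=
  forall x, P x -> forall eps, 0 < eps -> exists y, P y /\ y <> x /\ dist2 x y < eps.

Definition perfect_in (Y P : pt -> Prop) : Prop :=
  (forall x, P x -> Y x) /\ closed_in Y P /\ no_isolated P.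

Definition Bernstein_in (Y S : pt -> Prop) : Prop :=
  forall P, perfect_in Y P -> (exists x, P x) ->
    (exists x, P x /\ S x) /\ (exists x, P x /\ Y x /\ ~ S x).

(* Main.v *)
Require Import Defs.
From Stdlib Require Import Reals Classical ClassicalEpsilon FunctionalExtensionality Lra Lia ZArith.
From Stdlib Require Cantor.
From mathcomp Require ssreflect ssrbool eqtype boolp wochoice.
Open Scope R_scope.


Module WOm.
Import mathcomp.boot.ssreflect mathcomp.boot.ssrbool mathcomp.boot.eqtype mathcomp.classical.boolp.
Definition CE : eqType := (nat -> bool).

Lemma WO_exists : exists lt : (nat -> bool) -> (nat -> bool) -> Prop,
  well_founded lt /\ (forall x y, lt x y \/ x = y \/ lt y x) /\
  (forall x y z, lt x y -> lt y z -> lt x z) /\ (forall x, ~ lt x x).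
Proof.
case: (wochoice.well_ordering_principle CE) => R wo.
have pair : forall x y : CE, R x y \/ R y x.
  move=> x y.
  case: (wo [pred z | (z == x) || (z == y)]).
    by exists x; rewrite inE eqxx.
  move=> z [[zin low] _].
  move: zin; rewrite inE => /orP [/eqP E | /eqP E]; subst z.
  - left; apply: low; by rewrite inE eqxx orbT.
  - right; apply: low; by rewrite inE eqxx.
have refl : forall x : CE, R x x by move=> x; case: (pair x x).
have anti : forall x y : CE, R x y && R y x -> x = y.
  move=> x y /andP [Rxy Ryx].
  case: (wo [pred z | (z == x) || (z == y)]).
    by exists x; rewrite inE eqxx.
  move=> z [_ uniq].
  have -> : x = z.
    symmetry; apply: uniq; split; first by rewrite inE eqxx.
    by move=> w; rewrite inE => /orP [/eqP -> | /eqP ->].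
  apply: uniq; split; first by rewrite inE eqxx orbT.
  by move=> w; rewrite inE => /orP [/eqP -> | /eqP ->].
have trans : forall x y z : CE, R x y -> R y z -> R x z.
  move=> x y z Rxy Ryz.
  case: (wo [pred w | [|| w == x, w == y | w == z]]).
    by exists x; rewrite inE eqxx.
  move=> m [[min low] _].
  have Hx : R m x by apply: low; rewrite inE eqxx.
  have Hy : R m y by apply: low; rewrite inE eqxx orbT.
  have Hz : R m z by apply: low; rewrite inE eqxx !orbT.
  move: min; rewrite inE => /or3P [/eqP E | /eqP E | /eqP E]; subst m.
  - done.
  - have : x = y by apply: anti; rewrite Rxy Hx.
    by move=> ->.
  - have : y = z by apply: anti; rewrite Ryz Hy.
    by move=> E; subst y.
exists (fun x y => R x y /\ x <> y).
split; [| split; [| split]].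
- move=> x; apply: NNPP => nacc.
  case: (wo [pred z | `[< ~ Acc (fun x y : CE => R x y /\ x <> y) z >]]).
    by exists x; rewrite inE; apply/asboolP.
  move=> m [[min low] _].
  move: min; rewrite inE => /asboolP; apply.
  constructor=> y [Rym neq]; apply: NNPP => ny.
  have Rmy : R m y by apply: low; rewrite inE; apply/asboolP.
  by apply: neq; apply: anti; rewrite Rym Rmy.
- move=> x y; case: (Classical_Prop.classic (x = y)) => [->|ne]; first by right; left.
  case: (pair x y) => H; [left | right; right]; split=> //; auto.
- move=> x y z [Rxy nxy] [Ryz nyz]; split; first exact: trans Rxy Ryz.
  move=> E; subst z; apply: nxy; apply: anti; by rewrite Rxy Ryz.
- by move=> x [_ []].
Qed.
End WOm.

Definition perf1 (Q : R -> Prop) : Prop :=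
  (forall s, Q s -> -1 <= s <= 1) /\
  (forall s, -1 <= s <= 1 -> (forall eps, 0 < eps -> exists t, Q t /\ Rabs (s - t) < eps) -> Q s) /\
  (forall s, Q s -> forall eps, 0 < eps -> exists t, Q t /\ t <> s /\ Rabs (s - t) < eps).

Lemma abs_le_inv x d : Rabs x <= d -> -d <= x <= d.
Proof. unfold Rabs; destruct (Rcase_abs x); intros; lra. Qed.

Lemma abs_lt_inv x d : Rabs x < d -> -d < x < d.
Proof. unfold Rabs; destruct (Rcase_abs x); intros; lra. Qed.

Lemma lim_bound (u : nat -> R) l c d m :
  Un_cv u l -> (forall n, (n >= m)%nat -> Rabs (u n - c) <= d) -> Rabs (l - c) <= d.
Proof.
  intros Hcv Hb.
  destruct (Rle_or_lt (Rabs (l - c)) d) as [H|H]; auto.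
  destruct (Hcv (Rabs (l - c) - d)) as [N HN]; [lra|].
  specialize (HN (max N m) (Nat.le_max_l _ _)).
  specialize (Hb (max N m) (Nat.le_max_r _ _)).
  unfold R_dist in HN.
  assert (Rabs (l - c) <= Rabs (u (max N m) - l) + Rabs (u (max N m) - c)).
  { replace (l - c) with (-(u (max N m) - l) + (u (max N m) - c)) by ring.
    eapply Rle_trans; [apply Rabs_triang|]. rewrite Rabs_Ropp. lra. }
  lra.
Qed.

Lemma first_diff (P : nat -> Prop) : (exists n, P n) -> exists n, P n /\ forall i, (i < n)%nat -> ~ P i.
Proof.
  intros [n Hn].
  revert Hn. induction n as [n IH] using (well_founded_induction Wf_nat.lt_wf). intros Hn.
  destruct (classic (exists i, (i < n)%nat /\ P i)) as [[i [Hi Pi]]|H].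
  - exact (IH i Hi Pi).
  - exists n. split; auto. intros i Hi Pi. apply H. eauto.
Qed.

Section Cantor.
Variable Q : R -> Prop.
Hypothesis HQ : perf1 Q.
Hypothesis HQne : exists s, Q s.

Definition x0 : R := epsilon (inhabits 0) Q.
Definition other (x r : R) : R :=
  epsilon (inhabits 0) (fun z => Q z /\ z <> x /\ Rabs (x - z) < r / 4).
Definition child (p : R * R) (bit : bool) : R * R :=
  let x := fst p in let r := snd p in
  let z := other x r in
  (if bit then z else x, Rmin (Rabs (x - z) / 3) (r / 4)).
Fixpoint node (b : nat -> bool) (n : nat) : R * R :=
  match n with
  | O => (x0, 1)
  | S k => child (node b k) (b k)
  end.

Lemma other_spec x r : Q x -> 0 < r ->
  Q (other x r) /\ other x r <> x /\ Rabs (x - other x r) < r / 4.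
Proof.
  intros Qx Hr. unfold other. apply epsilon_spec.
  destruct HQ as [_ [_ Hni]]. apply (Hni x Qx (r/4)). lra.
Qed.

Lemma node_inv b n : Q (fst (node b n)) /\ 0 < snd (node b n).
Proof.
  induction n as [|n [IQ Ir]]; simpl.
  - split; [|lra]. unfold x0. apply epsilon_spec. exact HQne.
  - unfold child. destruct (other_spec _ _ IQ Ir) as [Q1 [N1 A1]].
    simpl. split.
    + destruct (b n); auto.
    + apply Rmin_glb_lt; [|lra].
      assert (0 < Rabs (fst (node b n) - other (fst (node b n)) (snd (node b n)))).
      { apply Rabs_pos_lt. intro E. apply N1. lra. }
      lra.
Qed.

Lemma node_step b n :
  Rabs (fst (node b (S n)) - fst (node b n)) <= snd (node b n) / 4 /\
  snd (node b (S n)) <= snd (node b n) / 4.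
Proof.
  destruct (node_inv b n) as [IQ Ir].
  destruct (other_spec _ _ IQ Ir) as [Q1 [N1 A1]].
  simpl. unfold child. simpl. split.
  - destruct (b n).
    + rewrite <- Rabs_Ropp. replace (- (other (fst (node b n)) (snd (node b n)) - fst (node b n)))
        with (fst (node b n) - other (fst (node b n)) (snd (node b n))) by ring. lra.
    + replace (fst (node b n) - fst (node b n)) with 0 by ring. rewrite Rabs_R0. lra.
  - apply Rmin_r.
Qed.

Lemma node_drift b m k :
  Rabs (fst (node b (m + k)) - fst (node b m)) <= snd (node b m) / 3 - snd (node b (m + k)) / 3.
Proof.
  induction k as [|k IH].
  - rewrite Nat.add_0_r. replace (fst (node b m) - fst (node b m)) with 0 by ring.
    rewrite Rabs_R0. lra.
  - replace (m + S k)%nat with (S (m + k)) by lia.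
    destruct (node_step b (m + k)) as [S1 S2].
    destruct (node_inv b (S (m + k))) as [_ P1].
    replace (fst (node b (S (m + k))) - fst (node b m)) with
      ((fst (node b (S (m + k))) - fst (node b (m + k))) + (fst (node b (m + k)) - fst (node b m))) by ring.
    eapply Rle_trans; [apply Rabs_triang|]. lra.
Qed.

Lemma node_rad b n : snd (node b n) <= (/4) ^ n.
Proof.
  induction n as [|n IH]; [simpl; lra|].
  destruct (node_step b n) as [_ S2].
  replace ((/4) ^ (S n)) with (/4 * (/4) ^ n) by (simpl; ring). lra.
Qed.

Lemma node_cauchy b : Cauchy_crit (fun n => fst (node b n)).
Proof.
  intros eps Heps.
  destruct (pow_lt_1_zero (/4) ltac:(rewrite Rabs_pos_eq; lra) eps Heps) as [N HN].
  exists N. intros n m Hn Hm. unfold R_dist.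
  assert (forall p q, (p >= N)%nat -> (q >= p)%nat -> Rabs (fst (node b q) - fst (node b p)) < eps).
  { intros p q Hp Hq. replace q with (p + (q - p))%nat by lia.
    eapply Rle_lt_trans; [apply node_drift|].
    destruct (node_inv b (p + (q - p))) as [_ P1].
    assert (snd (node b p) < eps).
    { eapply Rle_lt_trans; [apply node_rad|]. specialize (HN p Hp).
      rewrite Rabs_pos_eq in HN; [lra| apply pow_le; lra]. }
    lra. }
  destruct (Compare_dec.le_ge_dec n m).
  - rewrite <- Rabs_Ropp. replace (- (fst (node b n) - fst (node b m))) with (fst (node b m) - fst (node b n)) by ring.
    apply H; lia.
  - apply H; lia.
Qed.

Definition iota (b : nat -> bool) : R :=
  epsilon (inhabits 0) (fun l => Un_cv (fun n => fst (node b n)) l).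

Lemma iota_cv b : Un_cv (fun n => fst (node b n)) (iota b).
Proof.
  unfold iota. apply epsilon_spec.
  destruct (R_complete _ (node_cauchy b)) as [l Hl]. eauto.
Qed.

Lemma iota_near b m : Rabs (iota b - fst (node b m)) <= snd (node b m) / 3.
Proof.
  apply (lim_bound _ _ _ _ m (iota_cv b)).
  intros n Hn. replace n with (m + (n - m))%nat by lia.
  eapply Rle_trans; [apply node_drift|].
  destruct (node_inv b (m + (n - m))). lra.
Qed.

Lemma iota_in b : Q (iota b).
Proof.
  destruct HQ as [Hsub [Hcl _]]. apply Hcl.
  - assert (Rabs (iota b - 0) <= 1).
    { apply (lim_bound _ _ _ _ 0 (iota_cv b)). intros n _.
      destruct (Hsub _ (proj1 (node_inv b n))). rewrite Rminus_0_r.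
      apply Rabs_le; lra. }
    rewrite Rminus_0_r in H. destruct (abs_le_inv _ _ H). lra.
  - intros eps Heps. destruct (iota_cv b eps Heps) as [N HN].
    exists (fst (node b N)). split; [apply node_inv|].
    specialize (HN N (le_n _)). unfold R_dist in HN.
    rewrite <- Rabs_Ropp. replace (- (iota b - fst (node b N))) with (fst (node b N) - iota b) by ring. exact HN.
Qed.

Lemma node_agree b b' k : (forall i, (i < k)%nat -> b i = b' i) -> node b k = node b' k.
Proof.
  induction k as [|k IH]; intros H; simpl; auto.
  rewrite IH by (intros; apply H; lia). rewrite (H k) by lia. reflexivity.
Qed.

Lemma iota_inj b b' : iota b = iota b' -> b = b'.
Proof.
  intros E. apply NNPP. intro Hne.
  assert (exists n, b n <> b' n).
  { apply NNPP. intro H. apply Hne. apply functional_extensionality; intro n. apply NNPP. intro H2. apply H. eauto. }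
  destruct (first_diff _ H) as [k [Hk Hmin]].
  assert (Ag : node b k = node b' k).
  { apply node_agree. intros i Hi. apply NNPP. intro. apply (Hmin i Hi). auto. }
  pose proof (iota_near b (S k)) as N1. pose proof (iota_near b' (S k)) as N2.
  destruct (node_inv b k) as [IQ Ir].
  destruct (other_spec _ _ IQ Ir) as [Q1 [D1 A1]].
  simpl in N1, N2. rewrite <- Ag in N2. unfold child in N1, N2. simpl in N1, N2.
  set (x := fst (node b k)) in *. set (z := other x (snd (node b k))) in *.
  assert (Hd : 0 < Rabs (x - z)) by (apply Rabs_pos_lt; intro; apply D1; unfold z, x in *; lra).
  set (r' := Rmin (Rabs (x - z) / 3) (snd (node b k) / 4)) in *.
  assert (Hr1 : r' <= Rabs (x - z) / 3) by apply Rmin_l.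
  assert (Hr2 : 0 < r') by (apply Rmin_glb_lt; lra).
  rewrite E in N1.
  assert (Hxz : Rabs (x - z) <= 2 * r' / 3).
  { destruct (b k) eqn:Eb, (b' k) eqn:Eb'; try (exfalso; apply Hk; congruence).
    - replace (x - z) with (-(iota b' - x) + (iota b' - z)) by ring.
      eapply Rle_trans; [apply Rabs_triang|]. rewrite Rabs_Ropp. lra.
    - replace (x - z) with ((iota b' - z) - (iota b' - x)) by ring.
      eapply Rle_trans; [apply Rabs_triang|]. rewrite Rabs_Ropp. lra. }
  lra.
Qed.

End Cantor.

Lemma cantor_inj Q : perf1 Q -> (exists s, Q s) ->
  exists io : (nat -> bool) -> R, (forall b, Q (io b)) /\ (forall b b', io b = io b' -> b = b').
Proof.
  intros HQ HQne. exists (iota Q). split.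
  - intro b. apply iota_in; auto.
  - intros b b'. apply iota_inj; auto.
Qed.


Definition Jn (n : nat) (y : R) : Prop :=
  let (a, m) := Cantor.of_nat n in
  let (k1, k2) := Cantor.of_nat a in
  Rabs (y - (INR k1 - INR k2) / INR (S m)) < 2 / INR (S m).

Lemma Z_as_nat_diff (z : Z) : IZR z = INR (Z.to_nat z) - INR (Z.to_nat (- z)).
Proof.
  rewrite !INR_IZR_INZ.
  destruct (Z_le_gt_dec 0 z).
  - rewrite Z2Nat.id by lia. replace (Z.to_nat (-z)) with 0%nat by lia. simpl. ring.
  - rewrite (Z2Nat.id (-z)) by lia. replace (Z.to_nat z) with 0%nat by lia. simpl.
    rewrite opp_IZR. ring.
Qed.

Lemma J_basis x eps : 0 < eps -> exists n, Jn n x /\ forall y, Jn n y -> Rabs (y - x) < eps.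
Proof.
  intros He.
  destruct (archimed (4 / eps)) as [A1 _].
  set (m := Z.to_nat (up (4 / eps))).
  assert (Hm : 4 / eps < INR (S m)).
  { unfold m. rewrite S_INR, INR_IZR_INZ.
    destruct (Z_le_gt_dec 0 (up (4/eps))).
    - rewrite Z2Nat.id by lia. lra.
    - replace (Z.to_nat (up (4/eps))) with 0%nat by lia. simpl.
      assert (0 < 4 / eps) by (apply Rdiv_lt_0_compat; lra).
      assert (IZR 0 < IZR (up (4 / eps))) as A2 by (simpl; lra).
      apply lt_IZR in A2. lia. }
  assert (HS : 0 < INR (S m)) by (apply lt_0_INR; lia).
  destruct (archimed (x * INR (S m))) as [B1 B2].
  set (z := up (x * INR (S m))) in *.
  exists (Cantor.to_nat (Cantor.to_nat (Z.to_nat z, Z.to_nat (- z)), m)).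
  unfold Jn. rewrite !Cantor.cancel_of_to. rewrite <- Z_as_nat_diff.
  assert (Hc : Rabs (x - IZR z / INR (S m)) <= 1 / INR (S m)).
  { apply Rabs_le. split.
    - apply (Rmult_le_reg_r (INR (S m))); auto.
      replace ((x - IZR z / INR (S m)) * INR (S m)) with (x * INR (S m) - IZR z) by (field; lra).
      replace (- (1 / INR (S m)) * INR (S m)) with (-1) by (field; lra). lra.
    - apply (Rmult_le_reg_r (INR (S m))); auto.
      replace ((x - IZR z / INR (S m)) * INR (S m)) with (x * INR (S m) - IZR z) by (field; lra).
      replace ((1 / INR (S m)) * INR (S m)) with 1 by (field; lra). lra. }
  assert (H1 : 1 / INR (S m) < 2 / INR (S m)) by (apply Rmult_lt_compat_r; [apply Rinv_0_lt_compat|]; lra).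
  split; [lra|].
  intros y Hy.
  assert (H3 : 3 / INR (S m) < eps).
  { apply (Rmult_lt_reg_r (INR (S m))); auto.
    replace (3 / INR (S m) * INR (S m)) with 3 by (field; lra).
    apply (Rmult_lt_reg_l (/ eps)); [apply Rinv_0_lt_compat; lra|].
    replace (/ eps * (eps * INR (S m))) with (INR (S m)) by (field; lra).
    unfold Rdiv in Hm. lra. }
  replace (y - x) with ((y - IZR z / INR (S m)) - (x - IZR z / INR (S m))) by ring.
  eapply Rle_lt_trans; [apply Rabs_triang|]. rewrite Rabs_Ropp.
  assert (2 / INR (S m) + 1 / INR (S m) = 3 / INR (S m)) by (field; lra).
  lra.
Qed.

Definition closed1 (K : R -> Prop) : Prop :=
  forall x, (forall eps, 0 < eps -> exists y, K y /\ Rabs (x - y) < eps) -> K x.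

Definition decK (c : nat -> bool) (x : R) : Prop := forall n, c n = true -> ~ Jn n x.

Lemma encode K : closed1 K -> exists c, forall x, K x <-> decK c x.
Proof.
  intros HK.
  exists (fun n => if excluded_middle_informative (exists y, Jn n y /\ K y) then false else true).
  intros x. split.
  - intros Kx n. destruct (excluded_middle_informative _) as [_|H]; [discriminate|].
    intros _ Jx. apply H. eauto.
  - intros D. apply NNPP. intros nK. apply nK. apply HK. intros eps He.
    apply NNPP. intros Hno.
    destruct (J_basis x eps He) as [n [Jx Hsub]].
    apply (D n); auto.
    destruct (excluded_middle_informative _) as [[y [Jy Ky]]|]; auto.
    exfalso. apply Hno. exists y. split; auto.
    rewrite <- Rabs_Ropp. replace (- (x - y)) with (y - x) by ring. auto.
Qed.

Definition ev (c : nat -> bool) (n : nat) : bool := c (2 * n)%nat.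
Definition od (c : nat -> bool) (n : nat) : bool := c (S (2 * n)).
Definition merge2 (a b : nat -> bool) (m : nat) : bool :=
  if Nat.even m then a (Nat.div2 m) else b (Nat.div2 m).

Lemma ev_merge a b : ev (merge2 a b) = a.
Proof.
  apply functional_extensionality. intro n. unfold ev, merge2.
  rewrite Nat.div2_double, Nat.even_mul. reflexivity.
Qed.

Lemma od_merge a b : od (merge2 a b) = b.
Proof.
  apply functional_extensionality. intro n. unfold od, merge2.
  rewrite Nat.even_succ. replace (Nat.odd (2 * n)) with false.
  - rewrite Nat.div2_succ_double. reflexivity.
  - unfold Nat.odd. rewrite Nat.even_mul. reflexivity.
Qed.

Definition Cs := nat -> bool.
Definition Qof (c : Cs) : R -> Prop := decK (od (od c)).
Definition e1of (c : Cs) : R := epsilon (inhabits 0) (decK (ev c)).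
Definition e2of (c : Cs) : R := epsilon (inhabits 0) (decK (ev (od c))).
Definition dirc (c : Cs) : pt := (e1of c, e2of c).
Definition valid (c : Cs) : Prop :=
  (e1of c) ^ 2 + (e2of c) ^ 2 = 1 /\ perf1 (Qof c) /\ exists s, Qof c s.

Lemma singleton_closed x0 : closed1 (fun y => y = x0).
Proof.
  intros x H. apply NNPP. intro ne.
  destruct (H (Rabs (x - x0))) as [y [-> Hy]].
  - apply Rabs_pos_lt. intro. apply ne. lra.
  - lra.
Qed.

Lemma perf1_closed Q : perf1 Q -> closed1 Q.
Proof.
  intros [Hsub [Hcl _]] x Hx. apply Hcl; auto.
  split; apply NNPP; intro N.
  - destruct (Hx (-1 - x)) as [y [Qy Hy]]; [lra|]. destruct (Hsub y Qy).
    apply abs_lt_inv in Hy. lra.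
  - destruct (Hx (x - 1)) as [y [Qy Hy]]; [lra|]. destruct (Hsub y Qy).
    apply abs_lt_inv in Hy. lra.
Qed.

Lemma code_surj e1 e2 Q : e1 ^ 2 + e2 ^ 2 = 1 -> perf1 Q -> (exists s, Q s) ->
  exists c, valid c /\ dirc c = (e1, e2) /\ forall s, Qof c s <-> Q s.
Proof.
  intros He HQ HQne.
  destruct (encode _ (singleton_closed e1)) as [c0 H0].
  destruct (encode _ (singleton_closed e2)) as [c1 H1].
  destruct (encode _ (perf1_closed _ HQ)) as [c2 H2].
  set (c := merge2 c0 (merge2 c1 c2)).
  assert (E1 : e1of c = e1).
  { unfold e1of, c. rewrite ev_merge.
    assert (decK c0 (epsilon (inhabits 0) (decK c0))).
    { apply epsilon_spec. exists e1. apply H0. reflexivity. }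
    apply H0 in H. exact H. }
  assert (E2 : e2of c = e2).
  { unfold e2of, c. rewrite od_merge, ev_merge.
    assert (decK c1 (epsilon (inhabits 0) (decK c1))).
    { apply epsilon_spec. exists e2. apply H1. reflexivity. }
    apply H1 in H. exact H. }
  assert (EQ : forall s, Qof c s <-> Q s).
  { intro s. unfold Qof, c. rewrite !od_merge. split; apply H2. }
  exists c. split; [|split; auto].
  - unfold valid. rewrite E1, E2. split; auto. split.
    + destruct HQ as [Hs [Hc Hi]]. split; [|split].
      * intros s Hq. apply Hs, EQ, Hq.
      * intros s Hs1 Ha. apply EQ, Hc; auto. intros eps He'. destruct (Ha eps He') as [t [Qt Ht]].
        exists t. split; auto. apply EQ; auto.
      * intros s Qs eps He'. destruct (Hi s (proj1 (EQ s) Qs) eps He') as [t [Qt Ht]].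
        exists t. split; auto. apply EQ; auto.
    + destruct HQne as [s Hs]. exists s. apply EQ; auto.
  - unfold dirc. rewrite E1, E2. reflexivity.
Qed.

Definition fpr (e a : pt) : R := dot a e.
Definition point (e : pt) (s : R) : pt :=
  (s * fst e - sqrt (1 - s ^ 2) * snd e, s * snd e + sqrt (1 - s ^ 2) * fst e).

Lemma sqrt_sq s : -1 <= s <= 1 -> sqrt (1 - s ^ 2) * sqrt (1 - s ^ 2) = 1 - s ^ 2.
Proof. intros. apply sqrt_sqrt. nra. Qed.

Lemma point_fe e s : fst e ^ 2 + snd e ^ 2 = 1 -> fpr e (point e s) = s.
Proof.
  intros He. unfold fpr, point, dot. cbn [fst snd].
  replace ((s * fst e - sqrt (1 - s ^ 2) * snd e) * fst e + (s * snd e + sqrt (1 - s ^ 2) * fst e) * snd e)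
    with (s * (fst e ^ 2 + snd e ^ 2)) by ring. rewrite He. ring.
Qed.

Lemma point_S1 e s : fst e ^ 2 + snd e ^ 2 = 1 -> -1 <= s <= 1 -> S1 (point e s).
Proof.
  intros He Hs. unfold S1, point. cbn [fst snd].
  pose proof (sqrt_sq s Hs) as W.
  set (w := sqrt (1 - s ^ 2)) in *.
  replace ((s * fst e - w * snd e) ^ 2 + (s * snd e + w * fst e) ^ 2)
    with ((s ^ 2 + w * w) * (fst e ^ 2 + snd e ^ 2)) by ring.
  rewrite He, W. ring.
Qed.

Definition root (e e' : pt) (y : R) (b : bool) : R :=
  let al := dot e e' in
  let D := (y * al) ^ 2 - y ^ 2 + 1 - al ^ 2 in
  y * al + (if b then sqrt D else - sqrt D).

Lemma roots e e' y s :
  fst e ^ 2 + snd e ^ 2 = 1 -> fst e' ^ 2 + snd e' ^ 2 = 1 -> -1 <= s <= 1 ->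
  fpr e' (point e s) = y -> s = root e e' y true \/ s = root e e' y false.
Proof.
  intros He He' Hs Hy. unfold fpr, point, dot in Hy. cbn [fst snd] in Hy.
  pose proof (sqrt_sq s Hs) as W.
  set (w := sqrt (1 - s ^ 2)) in *.
  unfold root. set (al := dot e e').
  set (be := - snd e * fst e' + fst e * snd e').
  assert (Hab : al ^ 2 + be ^ 2 = 1).
  { unfold al, be, dot.
    replace ((fst e * fst e' + snd e * snd e') ^ 2 + (- snd e * fst e' + fst e * snd e') ^ 2)
      with ((fst e ^ 2 + snd e ^ 2) * (fst e' ^ 2 + snd e' ^ 2)) by ring.
    rewrite He, He'. ring. }
  assert (Hy2 : s * al + w * be = y).
  { rewrite <- Hy. unfold al, be, dot. ring. }
  assert (Hsq : (y - s * al) ^ 2 = (1 - s ^ 2) * (1 - al ^ 2)).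
  { replace (y - s * al) with (w * be) by lra.
    replace (1 - al ^ 2) with (be ^ 2) by lra.
    rewrite <- W. ring. }
  set (z := s - y * al).
  assert (Hz : z ^ 2 = (y * al) ^ 2 - y ^ 2 + 1 - al ^ 2).
  { unfold z.
    assert (Id : (s - y * al) ^ 2 - ((y * al) ^ 2 - y ^ 2 + 1 - al ^ 2) = (y - s * al) ^ 2 - (1 - s ^ 2) * (1 - al ^ 2)) by ring.
    rewrite Hsq in Id. lra. }
  rewrite <- Hz.
  replace (z ^ 2) with (Rsqr z) by (unfold Rsqr; ring).
  rewrite sqrt_Rsqr_abs. unfold Rabs. destruct (Rcase_abs z).
  - right. unfold z in *. lra.
  - left. unfold z in *. lra.
Qed.

Lemma fe_bound e x : fst e ^ 2 + snd e ^ 2 = 1 -> S1 x -> -1 <= fpr e x <= 1.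
Proof.
  intros He Hx. unfold S1 in Hx. unfold fpr, dot.
  assert ((fst x * fst e + snd x * snd e) ^ 2 <= 1).
  { replace 1 with ((fst x ^ 2 + snd x ^ 2) * (fst e ^ 2 + snd e ^ 2)) by (rewrite Hx, He; ring).
    assert (Id : (fst x ^ 2 + snd x ^ 2) * (fst e ^ 2 + snd e ^ 2) - (fst x * fst e + snd x * snd e) ^ 2
       = (fst x * snd e - snd x * fst e) ^ 2) by ring.
    assert (0 <= (fst x * snd e - snd x * fst e) ^ 2) by (apply pow2_ge_0).
    lra. }
  set (t := fst x * fst e + snd x * snd e) in *.
  split; nra.
Qed.

Definition small (I : Cs -> Prop) : Prop :=
  ~ exists (g : Cs -> nat -> Cs) (g0 : nat -> Cs),
      forall c, (exists n, g0 n = c) \/ (exists j, I j /\ exists n, g j n = c).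

Lemma cantor_diag : ~ exists g0 : nat -> Cs, forall c : Cs, exists n, g0 n = c.
Proof.
  intros [g0 H]. destruct (H (fun n => negb (g0 n n))) as [n Hn].
  pose proof (f_equal (fun f => f n) Hn) as E. simpl in E.
  destruct (g0 n n); discriminate.
Qed.

Lemma cover (I : Cs -> Prop) (P : R -> Prop) : small I -> perf1 P -> (exists s, P s) ->
  forall (H : Cs -> nat -> R) (h0 : nat -> R),
  exists s, P s /\ (forall j, I j -> forall n, s <> H j n) /\ (forall n, s <> h0 n).
Proof.
  intros Hs HP Hne H h0.
  destruct (cantor_inj P HP Hne) as [io [Hin Hinj]].
  apply NNPP. intro Hno. apply Hs.
  set (pre := fun r : R => epsilon (inhabits (fun _ : nat => false)) (fun c : Cs => io c = r)).
  assert (Hpre : forall c r, io c = r -> pre r = c).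
  { intros c r E. apply Hinj. unfold pre. rewrite E.
    apply (epsilon_spec (inhabits (fun _ : nat => false)) (fun c0 : Cs => io c0 = r)).
    exists c. exact E. }
  exists (fun j n => pre (H j n)), (fun n => pre (h0 n)).
  intros c.
  destruct (classic (exists n, io c = h0 n)) as [[n En]|N1].
  - left. exists n. apply Hpre. auto.
  - right. apply NNPP. intro N2. apply Hno. exists (io c). split; [apply Hin|]. split.
    + intros j Ij n E. apply N2. exists j. split; auto. exists n. apply Hpre. auto.
    + intros n E. apply N1. eauto.
Qed.

Section Core.
Variable lt : Cs -> Cs -> Prop.
Hypothesis lt_wf : well_founded lt.
Hypothesis lt_tri : forall x y, lt x y \/ x = y \/ lt y x.
Hypothesis lt_irr : forall x, ~ lt x x.

Lemma min_elem (P : Cs -> Prop) : (exists x, P x) -> exists m, P m /\ forall y, lt y m -> ~ P y.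
Proof.
  intros [x Px]. revert Px. induction x as [x IH] using (well_founded_induction lt_wf).
  intros Px. destruct (classic (exists y, lt y x /\ P y)) as [[y [Hy Py]]|N].
  - exact (IH y Hy Py).
  - exists x. split; auto. intros y Hy Py. apply N. eauto.
Qed.

Lemma stages : exists (St : Cs -> Prop) (tau : Cs -> nat -> Cs),
  (forall x, St x -> small (fun j => lt j x)) /\ (forall c, exists x, St x /\ exists n, tau x n = c).
Proof.
  destruct (classic (forall x, small (fun j => lt j x))) as [All|NAll].
  - exists (fun _ => True), (fun x _ => x). split; auto.
    intros c. exists c. split; auto. exists 0%nat. reflexivity.
  - assert (exists x, ~ small (fun j => lt j x)) as Ex.
    { apply NNPP. intro N. apply NAll. intro x. apply NNPP. intro N2. apply N. eauto. }
    destruct (min_elem _ Ex) as [x0 [Nx0 Hmin]].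
    unfold small in Nx0. apply NNPP in Nx0. destruct Nx0 as [g [g0 Hg]].
    destruct (classic (exists m, lt m x0)) as [[m Hm]|Nm].
    + exists (fun j => lt j x0).
      exists (fun j n => if excluded_middle_informative (j = m) then
                          (if Nat.even n then g j (Nat.div2 n) else g0 (Nat.div2 n)) else g j n).
      split.
      * intros x Hx. apply NNPP. intro N. apply (Hmin x Hx N).
      * intros c. destruct (Hg c) as [[n En]|[j [Hj [n En]]]].
        -- exists m. split; auto. exists (S (2 * n)).
           destruct (excluded_middle_informative (m = m)) as [_|N]; [|tauto].
           rewrite Nat.div2_succ_double, Nat.even_succ. unfold Nat.odd. rewrite Nat.even_mul. simpl. auto.
        -- exists j. split; auto.
           destruct (excluded_middle_informative (j = m)) as [Ej|Nj].
           ++ exists (2 * n)%nat. rewrite Nat.div2_double, Nat.even_mul. simpl. subst. auto.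
           ++ exists n. auto.
    + exfalso. apply cantor_diag. exists g0. intros c.
      destruct (Hg c) as [H|[j [Hj _]]]; auto. exfalso. apply Nm. eauto.
Qed.

Variable St : Cs -> Prop.
Variable tau : Cs -> nat -> Cs.
Hypothesis St_small : forall x, St x -> small (fun j => lt j x).
Hypothesis tau_cov : forall c, exists x, St x /\ exists n, tau x n = c.

Definition Stage := ((nat -> pt) * (nat -> R))%type.
Definition dflt : Stage := (fun _ => (0, 0), fun _ => 0).

Definition StageOK x (prev : Cs -> Stage) (Dt : Stage) : Prop :=
  forall n, valid (tau x n) ->
    S1 (fst Dt n) /\ Qof (tau x n) (fpr (dirc (tau x n)) (fst Dt n)) /\ Qof (tau x n) (snd Dt n) /\
    (forall j m, lt j x -> valid (tau j m) -> fpr (dirc (tau j m)) (fst Dt n) <> snd (prev j) m) /\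
    (forall j m, lt j x -> valid (tau j m) -> snd Dt n <> fpr (dirc (tau x n)) (fst (prev j) m)) /\
    (forall m, valid (tau x m) -> snd Dt n <> fpr (dirc (tau x n)) (fst Dt m)).

Lemma unit_dirc c : valid c -> fst (dirc c) ^ 2 + snd (dirc c) ^ 2 = 1.
Proof. intros [H _]. exact H. Qed.

Lemma stage_exists x : St x -> forall prev, exists Dt, StageOK x prev Dt.
Proof.
  intros Hx prev. pose proof (St_small x Hx) as sm.
  assert (S1ex : forall n, exists a : pt, valid (tau x n) ->
     S1 a /\ Qof (tau x n) (fpr (dirc (tau x n)) a) /\
     (forall j m, lt j x -> valid (tau j m) -> fpr (dirc (tau j m)) a <> snd (prev j) m)).
  { intro n. destruct (classic (valid (tau x n))) as [V|NV]; [| exists (0, 0); tauto].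
    pose proof (unit_dirc _ V) as He. destruct V as [_ [HP Hne]].
    destruct (cover (fun j => lt j x) _ sm HP Hne
      (fun j k => root (dirc (tau x n)) (dirc (tau j (Nat.div2 k))) (snd (prev j) (Nat.div2 k)) (Nat.even k))
      (fun _ => 0)) as [s [Ps [Hs _]]].
    assert (Hs1 : -1 <= s <= 1) by (destruct HP as [Hsub _]; auto).
    exists (point (dirc (tau x n)) s). intros _. split; [|split].
    - apply point_S1; auto.
    - rewrite point_fe; auto.
    - intros j m Hj Vj E.
      destruct (roots _ _ _ _ He (unit_dirc _ Vj) Hs1 E) as [R1|R1].
      + apply (Hs j Hj (2 * m)%nat). rewrite Nat.even_mul, Nat.div2_double. exact R1.
      + apply (Hs j Hj (S (2 * m))). rewrite Nat.even_succ. unfold Nat.odd. rewrite Nat.even_mul, Nat.div2_succ_double.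
        exact R1. }
  set (af := fun n => epsilon (inhabits (0, 0)) (fun a : pt => valid (tau x n) ->
     S1 a /\ Qof (tau x n) (fpr (dirc (tau x n)) a) /\
     (forall j m, lt j x -> valid (tau j m) -> fpr (dirc (tau j m)) a <> snd (prev j) m))).
  assert (Haf : forall n, valid (tau x n) ->
     S1 (af n) /\ Qof (tau x n) (fpr (dirc (tau x n)) (af n)) /\
     (forall j m, lt j x -> valid (tau j m) -> fpr (dirc (tau j m)) (af n) <> snd (prev j) m)).
  { intro n. unfold af. apply epsilon_spec. apply S1ex. }
  assert (S2ex : forall n, exists y : R, valid (tau x n) -> Qof (tau x n) y /\
    (forall j m, lt j x -> valid (tau j m) -> y <> fpr (dirc (tau x n)) (fst (prev j) m)) /\
    (forall m, valid (tau x m) -> y <> fpr (dirc (tau x n)) (af m))).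
  { intro n. destruct (classic (valid (tau x n))) as [V|NV]; [| exists 0; tauto].
    destruct V as [_ [HP Hne]].
    destruct (cover (fun j => lt j x) _ sm HP Hne
      (fun j k => fpr (dirc (tau x n)) (fst (prev j) k)) (fun m => fpr (dirc (tau x n)) (af m)))
      as [y [Py [Hy1 Hy2]]].
    exists y. intros _. split; [auto|split].
    - intros j m Hj _. apply Hy1; auto.
    - intros m _. apply Hy2. }
  set (yf := fun n => epsilon (inhabits 0) (fun y : R => valid (tau x n) -> Qof (tau x n) y /\
    (forall j m, lt j x -> valid (tau j m) -> y <> fpr (dirc (tau x n)) (fst (prev j) m)) /\
    (forall m, valid (tau x m) -> y <> fpr (dirc (tau x n)) (af m)))).
  assert (Hyf : forall n, valid (tau x n) -> Qof (tau x n) (yf n) /\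
    (forall j m, lt j x -> valid (tau j m) -> yf n <> fpr (dirc (tau x n)) (fst (prev j) m)) /\
    (forall m, valid (tau x m) -> yf n <> fpr (dirc (tau x n)) (af m))).
  { intro n. unfold yf. apply epsilon_spec. apply S2ex. }
  exists (af, yf). intros n V. cbn [fst snd].
  destruct (Haf n V) as [A1 [A2 A3]]. destruct (Hyf n V) as [B1 [B2 B3]].
  repeat split; auto.
Qed.

Lemma StageOK_ext x p1 p2 Dt : (forall j, lt j x -> p1 j = p2 j) -> StageOK x p1 Dt -> StageOK x p2 Dt.
Proof.
  intros Hp H n V. destruct (H n V) as [A1 [A2 [A3 [A4 [A5 A6]]]]].
  repeat split; auto.
  - intros j m Hj Vj. rewrite <- (Hp j Hj). auto.
  - intros j m Hj Vj. rewrite <- (Hp j Hj). auto.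
Qed.

Definition ext x (rec : forall y, lt y x -> Stage) : Cs -> Stage :=
  fun j => match excluded_middle_informative (lt j x) with
           | left h => rec j h
           | right _ => dflt
           end.

Definition step x (rec : forall y, lt y x -> Stage) : Stage :=
  epsilon (inhabits dflt) (StageOK x (ext x rec)).

Definition F : Cs -> Stage := Fix lt_wf (fun _ => Stage) step.

Lemma F_eq x : F x = step x (fun y _ => F y).
Proof.
  unfold F. apply (Fix_eq lt_wf (fun _ => Stage) step).
  intros x0 f g Hfg. unfold step.
  assert (ext x0 f = ext x0 g) as ->; auto.
  apply functional_extensionality. intro j. unfold ext.
  destruct (excluded_middle_informative (lt j x0)); auto.
Qed.

Lemma F_ok x : St x -> StageOK x F (F x).
Proof.
  intros Hx. rewrite F_eq. unfold step.
  apply (StageOK_ext x (ext x (fun y _ => F y))).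
  - intros j Hj. unfold ext. destruct (excluded_middle_informative (lt j x)); tauto.
  - apply epsilon_spec. apply stage_exists; auto.
Qed.

Definition Aset (a : pt) : Prop :=
  exists x n, St x /\ valid (tau x n) /\ a = fst (F x) n.

Lemma consistency x x' n m : St x -> St x' -> valid (tau x n) -> valid (tau x' m) ->
  fpr (dirc (tau x n)) (fst (F x') m) <> snd (F x) n.
Proof.
  intros Hx Hx' Vn Vm.
  destruct (F_ok x Hx n Vn) as [_ [_ [_ [_ [A5 A6]]]]].
  destruct (F_ok x' Hx' m Vm) as [_ [_ [_ [B4 _]]]].
  destruct (lt_tri x' x) as [L|[E|L]].
  - intro E. apply (A5 x' m L Vm). auto.
  - subst x'. intro E. apply (A6 m Vm). auto.
  - apply (B4 x n L Vn).
Qed.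

Lemma core_prop :
  (forall a, Aset a -> S1 a) /\
  forall c, valid c -> (exists a, Aset a /\ Qof c (fpr (dirc c) a)) /\
                       (exists y, Qof c y /\ forall a, Aset a -> fpr (dirc c) a <> y).
Proof.
  split.
  - intros a [x [n [Hx [V ->]]]]. apply (F_ok x Hx n V).
  - intros c Vc. destruct (tau_cov c) as [x [Hx [n <-]]].
    destruct (F_ok x Hx n Vc) as [A1 [A2 [A3 _]]].
    split.
    + exists (fst (F x) n). split; auto. exists x, n. auto.
    + exists (snd (F x) n). split; auto.
      intros a [x' [m [Hx' [Vm ->]]]]. apply consistency; auto.
Qed.

End Core.

Lemma core : exists A : pt -> Prop,
  (forall a, A a -> S1 a) /\
  forall c, valid c -> (exists a, A a /\ Qof c (fpr (dirc c) a)) /\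
                       (exists y, Qof c y /\ forall a, A a -> fpr (dirc c) a <> y).
Proof.
  destruct WOm.WO_exists as [lt [Hwf [Htri [_ Hirr]]]].
  destruct (stages lt Hwf) as [St [tau [Hs Hc]]].
  exists (Aset lt Hwf St tau).
  apply core_prop; auto.
Qed.

Definition Lmap (p u : pt) (nn : R) (s : R) : pt :=
  (fst p + (s / nn - dot p u / dot u u) * fst u, snd p + (s / nn - dot p u / dot u u) * snd u).
Definition edir (u : pt) (nn : R) : pt := (fst u / nn, snd u / nn).

Section Geo.
Variables p u : pt.
Variable nn : R.
Hypothesis Hnn : nn * nn = dot u u.
Hypothesis Hnn0 : 0 < nn.

Lemma Npos : 0 < dot u u.
Proof. rewrite <- Hnn. nra. Qed.

Lemma edir_unit : fst (edir u nn) ^ 2 + snd (edir u nn) ^ 2 = 1.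
Proof.
  unfold edir. cbn [fst snd].
  replace ((fst u / nn) ^ 2 + (snd u / nn) ^ 2) with (dot u u / (nn * nn)) by (unfold dot; field; lra).
  rewrite Hnn. field. pose proof Npos. lra.
Qed.

Lemma proj_L x : orth_proj p u x = Lmap p u nn (fpr (edir u nn) x).
Proof.
  pose proof Npos as HN.
  unfold orth_proj, Lmap.
  assert (E : dot (fst x - fst p, snd x - snd p) u / dot u u = fpr (edir u nn) x / nn - dot p u / dot u u).
  { unfold fpr, edir, dot. cbn [fst snd].
    replace ((fst x * (fst u / nn) + snd x * (snd u / nn)) / nn) with
      ((fst x * fst u + snd x * snd u) / (nn * nn)) by (field; lra).
    rewrite Hnn. unfold dot in HN |- *. field. lra. }
  cbv zeta. rewrite E. reflexivity.
Qed.

Lemma L_dist s t : dist2 (Lmap p u nn s) (Lmap p u nn t) = Rabs (s - t).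
Proof.
  pose proof Npos as HN.
  unfold dist2, Lmap. cbn [fst snd].
  set (k := dot p u / dot u u).
  replace ((fst p + (s / nn - k) * fst u - (fst p + (t / nn - k) * fst u)) ^ 2 +
           (snd p + (s / nn - k) * snd u - (snd p + (t / nn - k) * snd u)) ^ 2)
    with (Rsqr (s - t) * (dot u u / (nn * nn))) by (unfold Rsqr, dot; field; lra).
  rewrite Hnn. replace (dot u u / dot u u) with 1 by (field; lra).
  rewrite Rmult_1_r. apply sqrt_Rsqr_abs.
Qed.

Lemma L_inj s t : Lmap p u nn s = Lmap p u nn t -> s = t.
Proof.
  intros E. pose proof (L_dist s t) as D1. rewrite E in D1.
  rewrite L_dist in D1. replace (t - t) with 0 in D1 by ring. rewrite Rabs_R0 in D1.
  symmetry in D1. destruct (Rcase_abs (s - t)).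
  - rewrite Rabs_left in D1; lra.
  - rewrite Rabs_right in D1; lra.
Qed.

Lemma Y_char z : image (orth_proj p u) S1 z <-> exists s, -1 <= s <= 1 /\ z = Lmap p u nn s.
Proof.
  split.
  - intros [x [Sx ->]]. exists (fpr (edir u nn) x). split.
    + apply fe_bound; auto. apply edir_unit.
    + apply proj_L.
  - intros [s [Hs ->]]. exists (point (edir u nn) s). split.
    + apply point_S1; auto. apply edir_unit.
    + rewrite proj_L. rewrite point_fe; auto. apply edir_unit.
Qed.

End Geo.

Lemma sqrt_dot u : u <> (0, 0) -> sqrt (dot u u) * sqrt (dot u u) = dot u u /\ 0 < sqrt (dot u u).
Proof.
  intros Hu.
  assert (0 < dot u u).
  { unfold dot. destruct u as [u1 u2]. cbn [fst snd].
    destruct (Req_dec u1 0); destruct (Req_dec u2 0); subst.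
    - exfalso. apply Hu. reflexivity.
    - nra. - nra. - nra. }
  split; [apply sqrt_sqrt; lra| apply sqrt_lt_R0; lra].
Qed.

Theorem mainTheorem5 :
  exists A : pt -> Prop, (forall x, A x -> S1 x) /\
    forall p u : pt, u <> (0, 0) ->
      Bernstein_in (image (orth_proj p u) S1) (image (orth_proj p u) A).
Proof.
  destruct core as [A [HAS Hcov]].
  exists A. split; auto.
  intros p u Hu.
  destruct (sqrt_dot u Hu) as [Hnn Hnn0].
  set (nn := sqrt (dot u u)) in *.
  set (e := edir u nn).
  set (L := Lmap p u nn).
  intros P [Psub [Pcl Pni]] [z Pz].
  set (Q := fun s => P (L s)).
  assert (HQ : perf1 Q).
  { split; [|split].
    - intros s Qs. destruct (proj1 (Y_char p u nn Hnn Hnn0 _) (Psub _ Qs)) as [s' [Hs' E]].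
      apply L_inj in E; auto. subst. auto.
    - intros s Hs Ha. unfold Q. apply Pcl.
      + apply (Y_char p u nn Hnn Hnn0). eauto.
      + intros eps Heps. destruct (Ha eps Heps) as [t [Qt Ht]].
        exists (L t). split; auto. unfold L. rewrite L_dist; auto.
    - intros s Qs eps Heps. destruct (Pni _ Qs eps Heps) as [y [Py [Hne Hd]]].
      destruct (proj1 (Y_char p u nn Hnn Hnn0 _) (Psub _ Py)) as [t [Ht ->]].
      exists t. split; [exact Py|]. split.
      + intro E. apply Hne. subst. reflexivity.
      + unfold L in Hd. rewrite L_dist in Hd; auto. }
  assert (HQne : exists s, Q s).
  { destruct (proj1 (Y_char p u nn Hnn Hnn0 _) (Psub _ Pz)) as [t [Ht ->]]. exists t. exact Pz. }
  pose proof (edir_unit u nn Hnn Hnn0) as Hunit.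
  destruct (code_surj (fst e) (snd e) Q Hunit HQ HQne) as [c [Vc [Hdir HQc]]].
  destruct (Hcov c Vc) as [[a [Aa Qa]] [y [Qy Hy]]].
  replace (dirc c) with e in Qa, Hy by (rewrite Hdir; reflexivity).
  split.
  - exists (L (fpr e a)). split.
    + apply HQc in Qa. exact Qa.
    + exists a. split; auto. unfold L, e. symmetry. apply proj_L; auto.
  - exists (L y). split; [apply HQc in Qy; exact Qy|]. split.
    + apply Psub. apply HQc in Qy. exact Qy.
    + intros [a' [Aa' E]]. rewrite (proj_L p u nn Hnn Hnn0) in E.
      apply L_inj in E; auto. apply (Hy a' Aa'). fold e in E. auto.
Qed.
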